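(* Let $\beta\in V_A\setminus\{\emptyset\}$ and $\nu\in\beta V_A$ with $\mathfrak c(\nu_{|\nu|})\ge2$. Choose a bijection $\iota_\nu:\{1,\dots,\mathfrak c(\nu_{|\nu|})\}\to\mathfrak C(\nu_{|\nu|})$ and set $q_m=\sum_{k=1}^mP_{\nu_{|\nu|},\iota_\nu(k)}$. For $j\in\{1,\dots,\mathfrak c(\nu_{|\nu|})-1\}$ define $a^{(\nu,j)}\in\mathbb R^{\mathfrak c(\nu_{|\nu|})}$ by $$a^{(\nu,j)}_k=\begin{cases}\Bigl(\frac{P_{\nu_{|\nu|},\iota_\nu(j+1)}}{\mu_c(C(\nu))q_jq_{j+1}}\Bigr)^{1/2},&1\le k\le j,\\ -\Bigl(\frac{q_j}{\mu_c(C(\nu))q_{j+1}P_{\nu_{|\nu|},\iota_\nu(j+1)}}\Bigr)^{1/2},&k=j+1,\\ 0,&k\ge j+2,\end{cases}$$ and $h_{\nu,j}=\sum_{k=1}^{\mathfrak c(\nu_{|\nu|})}a^{(\nu,j)}_k\chi_{C(\nu\iota_\nu(k))}$. Then: (1) $h_{\nu,j}$ is supported on $C(\nu)$ and constant on each $C(\nu i)$, $i\in\mathfrak C(\nu_{|\nu|})$; (2) $\int_{\Omega_A}h_{\nu,j}\,d\mu_c=0$; (3) $\langle h_{\nu,j},h_{\nu,j'}\rangle_{L^2(\Omega_A,\mu_c)}=\delta_{j,j'}$; (4) $\{\mu_c(C(\nu))^{-1/2}\chi_{C(\nu)}\}\cup\{h_{\nu,j}:1\le j\le\mathfrak c(\nu_{|\nu|})-1\}$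 is an orthonormal basis of the space of functions on $C(\nu)$ that are constant on each $C(\nu i)$.
   Context: $A\in M_N(\{0,1\})$ is primitive; $V_A$ is the set of admissible finite words (words $x_1\cdots x_k$ over $\{1,\dots,N\}$ with $A_{x_n,x_{n+1}}=1$), $\emptyset$ the empty word, $\beta V_A$ the admissible words starting with $\beta$. $\Omega_A$ is the space of infinite admissible sequences, $C(\alpha)$ the cylinder of sequences starting with $\alpha$, $\chi_S$ a characteristic function. $\lambda_A$ is the Perron–Frobenius eigenvalue, $u>0$ with $Au=\lambda_Au$, $\sum u_i=1$; $P_{i,j}=A_{i,j}u_j/(\lambda_Au_i)$. $\mathfrak C(i)=\{j:A_{i,j}=1\}$, $\mathfrak c(i)=\#\mathfrak C(i)$. $\mu_c$ is the Borel probability measure on $\Omega_A$ with $\mu_c(C(\alpha_1\cdots\alpha_n))=u_{\alpha_n}\lambda_A^{-(n-1)}$. *)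

(* Defs.v *)
From HB Require Import structures.
From mathcomp Require Import all_boot all_order all_algebra.
From mathcomp Require Import all_classical all_reals all_analysis.
Set Implicit Arguments. Unset Strict Implicit. Unset Printing Implicit Defensive.
Import Order.TTheory GRing.Theory Num.Theory.
Local Open Scope classical_set_scope.
Local Open Scope ring_scope.

(* The alphabet {1,...,N} is represented by 'I_n.+1 (N = n+1, letters 0..n). *)

Definition seqspace (n : nat) := nat -> 'I_n.+1.
HB.instance Definition _ (n : nat) := Choice.on (seqspace n).
HB.instance Definition _ (n : nat) := isPointed.Build (seqspace n) (fun _ => ord0).

Section SFT.
Variables (R : realType) (n : nat).
Implicit Types (A : 'M[R]_n.+1).

Definition zero_one_mx A := forall i j, A i j = 0 \/ A i j = 1.

Definition mxpow A (k : nat) : 'M[R]_n.+1 := iter k (fun B => A *m B) 1%:M.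

Definition primitive_mx A := exists2 k, (0 < k)%N & forall i j, 0 < mxpow A k i j.

Definition admissible A (w : seq 'I_n.+1) := sorted (fun a b => A a b == 1) w.

Definition adm_seq A (x : seqspace n) := forall k, A (x k) (x k.+1) = 1.

Definition cyl A (alpha : seq 'I_n.+1) : set (seqspace n) :=
  [set x | adm_seq A x /\ forall k, (k < size alpha)%N -> x k = nth ord0 alpha k].

Definition Omega A := g_sigma_algebraType (range (cyl A)).

Definition children A (i : 'I_n.+1) : {set 'I_n.+1} := [set j | A i j == 1].
Definition nchildren A (i : 'I_n.+1) : nat := #|children A i|.

Definition Pmat A (lam : R) (u : 'I_n.+1 -> R) (i j : 'I_n.+1) : R :=
  A i j * u j / (lam * u i).

Definition ip A (mu : {measure set (Omega A) -> \bar R}) (f g : Omega A -> R) : \bar R :=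
  (\int[mu]_x (f x * g x)%:E)%E.

(* functions on Omega_A supported on C(nu) and constant on each C(nu i),
   i in \mathfrak C(nu_{|nu|}) (functions on Omega_A are identified with
   functions on the ambient sequence space vanishing outside Omega_A) *)
Definition loc_const_space A (nu : seq 'I_n.+1) (f : Omega A -> R) : Prop :=
  (forall x, ~ cyl A nu x -> f x = 0) /\
  (forall i, i \in children A (last ord0 nu) ->
     forall x y, cyl A (rcons nu i) x -> cyl A (rcons nu i) y -> f x = f y).

(* q_m = sum_{k=1}^m P_{nu_{|nu|}, iota(k)}; here iota is 0-indexed on 'I_c,
   so q_m = sum over 0-based k < m. *)
Definition qsum (c : nat) (P : 'I_n.+1 -> 'I_n.+1 -> R) (l : 'I_n.+1)
  (iota : 'I_c -> 'I_n.+1) (m : nat) : R :=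
  \sum_(k < c | (k < m)%N) P l (iota k).

(* coefficient a^{(nu,j)}_k, with 0-based j, k : 'I_c
   (0-based j corresponds to the paper's j, since the paper's iota(j+1) is
    our iota j; 0-based k corresponds to the paper's k+1). *)
Definition acoef (c : nat) (P : 'I_n.+1 -> 'I_n.+1 -> R) (l : 'I_n.+1)
  (iota : 'I_c -> 'I_n.+1) (mc : R) (j k : 'I_c) : R :=
  let q := qsum P l iota in
  let p := P l (iota j) in
  if (k < j)%N then Num.sqrt (p / (mc * q j * q j.+1))
  else if k == j then - Num.sqrt (q j / (mc * q j.+1 * p))
  else 0.

Definition hfun A (nu : seq 'I_n.+1) (c : nat) (P : 'I_n.+1 -> 'I_n.+1 -> R)
  (iota : 'I_c -> 'I_n.+1) (mc : R) (j : 'I_c) (x : Omega A) : R :=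
  \sum_(k < c) acoef P (last ord0 nu) iota mc j k * \1_(cyl A (rcons nu (iota k))) x.

End SFT.

(* Main.v *)
Require Import Defs.
From HB Require Import structures.
From mathcomp Require Import all_boot all_order all_algebra.
From mathcomp Require Import all_classical all_reals all_analysis.
From mathcomp Require Import ring lra.
Import Order.TTheory GRing.Theory Num.Theory.
Local Open Scope classical_set_scope.
Local Open Scope ring_scope.

Section Alg.
Variables (R : realType) (n c : nat) (P : 'I_n.+1 -> 'I_n.+1 -> R) (l : 'I_n.+1)
  (iota : 'I_c -> 'I_n.+1) (mc : R).
Hypothesis pp : forall k, 0 < P l (iota k).
Hypothesis mcp : 0 < mc.
Local Notation p k := (P l (iota k)).
Local Notation q := (qsum P l iota).
Local Notation a := (acoef P l iota mc).

Lemma qS (j : 'I_c) : q j.+1 = q j + p j.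
Proof.
rewrite /qsum (bigD1 j) //= addrC; congr (_ + _).
by apply: eq_bigl => k; rewrite ltnS ltn_neqAle andbC.
Qed.

Lemma q_gt0 (j : 'I_c) : (0 < j)%N -> 0 < q j.
Proof.
move=> j0.
pose k0 : 'I_c := Ordinal (leq_ltn_trans (leq0n j) (ltn_ord j)).
rewrite /qsum (bigD1 k0) //=; apply: ltr_wpDr; last exact: pp.
by apply: sumr_ge0 => k _; apply/ltW/pp.
Qed.

Lemma sum_split (j : 'I_c) (F : 'I_c -> R) :
  (forall k : 'I_c, (j < k)%N -> F k = 0) ->
  \sum_k F k = \sum_(k : 'I_c | (k < j)%N) F k + F j.
Proof.
move=> F0; rewrite (bigID (fun k : 'I_c => (k < j)%N)) /=; congr (_ + _).
rewrite (bigD1 j) ?ltnn //= big1 ?addr0 // => k /andP[kj kj'].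
apply: F0; rewrite ltn_neqAle eq_sym kj' /=; by rewrite leqNgt.
Qed.

Lemma sum_lt_w (j : 'I_c) (r : R) :
  \sum_(k : 'I_c | (k < j)%N) r * (mc * p k) = r * (mc * q j).
Proof. by rewrite -mulr_sumr -mulr_sumr. Qed.

Lemma a_lt (j k : 'I_c) : (k < j)%N -> a j k = Num.sqrt (p j / (mc * q j * q j.+1)).
Proof. by rewrite /acoef => ->. Qed.
Lemma a_eq (j : 'I_c) : a j j = - Num.sqrt (q j / (mc * q j.+1 * p j)).
Proof. by rewrite /acoef ltnn eqxx. Qed.
Lemma a_gt (j k : 'I_c) : (j < k)%N -> a j k = 0.
Proof.
move=> jk; rewrite /acoef ltnNge (ltnW jk) /=.
by have -> : (k == j) = false by apply/negbTE; rewrite neq_ltn jk orbT.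
Qed.

Lemma alg_int (j : 'I_c) : (0 < j)%N -> \sum_k a j k * (mc * p j) = 0 -> True.
Proof. by []. Qed.

Lemma alg_int0 (j : 'I_c) : (0 < j)%N -> \sum_k a j k * (mc * p k) = 0.
Proof.
move=> j0; rewrite (sum_split j) => [|k jk]; last by rewrite a_gt // mul0r.
rewrite (eq_bigr (fun k => Num.sqrt (p j / (mc * q j * q j.+1)) * (mc * p k)));
  last by move=> k kj; rewrite a_lt.
rewrite sum_lt_w a_eq.
have qp := @q_gt0 j j0; have pj := pp j; have q1 : 0 < q j.+1 by rewrite qS addr_gt0.
apply/eqP; rewrite mulNr subr_eq0; apply/eqP.
have e1 : mc * q j = Num.sqrt ((mc * q j) ^+ 2).
  by rewrite sqrtr_sqr ger0_norm // mulr_ge0 // ltW.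
have e2 : mc * p j = Num.sqrt ((mc * p j) ^+ 2).
  by rewrite sqrtr_sqr ger0_norm // mulr_ge0 // ltW.
rewrite [X in _ * X = _]e1 [X in _ = _ * X]e2 -!sqrtrM ?divr_ge0 ?mulr_ge0 ?ltW //.
f_equal; field.
by rewrite !gt_eqF.
Qed.

Lemma alg_norm (j : 'I_c) : (0 < j)%N -> \sum_k a j k * a j k * (mc * p k) = 1.
Proof.
move=> j0; rewrite (sum_split j) => [|k jk]; last by rewrite a_gt // !mul0r.
rewrite (eq_bigr (fun k => (Num.sqrt (p j / (mc * q j * q j.+1)) ^+ 2) * (mc * p k)));
  last by move=> k kj; rewrite a_lt.
rewrite sum_lt_w a_eq mulNr mulrN opprK -expr2.
have qp := @q_gt0 j j0; have pj := pp j; have q1 : 0 < q j.+1 by rewrite qS addr_gt0.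
rewrite !sqr_sqrtr ?divr_ge0 ?mulr_ge0 ?ltW //.
rewrite qS; field.
by rewrite !gt_eqF // addr_gt0.
Qed.

Lemma alg_orth (j j' : 'I_c) : (0 < j)%N -> (j < j')%N ->
  \sum_k a j k * a j' k * (mc * p k) = 0.
Proof.
move=> j0 jj.
rewrite (eq_bigr (fun k => Num.sqrt (p j' / (mc * q j' * q j'.+1)) * (a j k * (mc * p k)))).
  by rewrite -mulr_sumr alg_int0 ?mulr0.
move=> k _; case: (ltnP j k) => jk; first by rewrite a_gt // !mul0r mulr0.
by rewrite (@a_lt j' k (leq_ltn_trans jk jj)); ring.
Qed.

Hypothesis psum : \sum_k p k = 1.

Lemma alg_e0 : \sum_k (Num.sqrt mc)^-1 * (Num.sqrt mc)^-1 * (mc * p k) = 1.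
Proof.
rewrite -mulr_sumr -mulr_sumr psum mulr1 -invfM -expr2 sqr_sqrtr ?ltW //.
by rewrite mulVf // gt_eqF.
Qed.

Lemma alg_e0h (j : 'I_c) : (0 < j)%N ->
  \sum_k (Num.sqrt mc)^-1 * a j k * (mc * p k) = 0.
Proof.
move=> j0; under eq_bigr do rewrite -mulrA.
by rewrite -mulr_sumr alg_int0 // mulr0.
Qed.

Lemma alg_hh (i j : 'I_c) : (0 < i)%N -> (0 < j)%N ->
  \sum_k a i k * a j k * (mc * p k) = (i == j)%:R.
Proof.
move=> i0 j0; case: (ltngtP i j) => ij.
- have -> : (i == j) = false by apply/negbTE; rewrite neq_ltn ij.
  by rewrite alg_orth.
- have -> : (i == j) = false by apply/negbTE; rewrite neq_ltn ij orbT.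
  under eq_bigr do rewrite [a i _ * _]mulrC.
  by rewrite alg_orth.
- have e : i = j by apply: val_inj.
  by rewrite e eqxx alg_norm.
Qed.

Lemma alg_span (v : 'I_c -> R) (k0 : 'I_c) (k00 : val k0 = 0%N) :
  exists (c0 : R) (cs : 'I_c -> R), forall k,
    v k = c0 * (Num.sqrt mc)^-1 + \sum_(j < c | (0 < j)%N) cs j * a j k.
Proof.
pose M : 'M[R]_c := \matrix_(i, k) (if (0 < i)%N then a i k else (Num.sqrt mc)^-1).
pose B : 'M[R]_c := \matrix_(k, j) (mc * p k * M j k).
have MB : M *m B = 1%:M.
  apply/matrixP => i j; rewrite !mxE.
  under eq_bigr do rewrite !mxE.
  have [i0|i0] := boolP (0 < i)%N; have [j0|j0] := boolP (0 < j)%N.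
  - rewrite (eq_bigr (fun k => a i k * a j k * (mc * p k))); last by move=> k _; ring.
    by rewrite alg_hh.
  - have -> : (i == j) = false.
      by apply/negP => /eqP ij; rewrite ij in i0; rewrite i0 in j0.
    rewrite (eq_bigr (fun k => (Num.sqrt mc)^-1 * a i k * (mc * p k))); last by move=> k _; ring.
    by rewrite alg_e0h.
  - have -> : (i == j) = false.
      by apply/negP => /eqP ij; rewrite ij in i0; rewrite j0 in i0.
    rewrite (eq_bigr (fun k => (Num.sqrt mc)^-1 * a j k * (mc * p k))); last by move=> k _; ring.
    by rewrite alg_e0h.
  - have -> : i = j.
      by move: i0 j0; rewrite -!leqNgt !leqn0 => /eqP a1 /eqP a2; apply: val_inj; rewrite /= a1 a2.
    rewrite eqxx (eq_bigr (fun k => (Num.sqrt mc)^-1 * (Num.sqrt mc)^-1 * (mc * p k))); last by move=> k _; ring.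
    by rewrite alg_e0.
have BM := mulmx1C MB.
pose rv : 'rV[R]_c := \row_k v k.
pose w := rv *m B.
have rvE : rv = w *m M by rewrite /w -mulmxA BM mulmx1.
exists (w ord0 k0), (fun j => w ord0 j).
move=> k; have := congr1 (fun m : 'M[R]_(1, c) => m ord0 k) rvE; rewrite !mxE => ->.
under eq_bigr do rewrite mxE.
rewrite (bigID (fun j : 'I_c => (0 < j)%N)) /= addrC; congr (_ + _).
  rewrite (big_pred1 k0) /=; first by rewrite mxE k00.
  move=> j; by rewrite -leqNgt leqn0 /= -k00; apply/idP/idP => /eqP; [move/val_inj => -> | move=> ->].
by apply: eq_bigr => j j0; rewrite [M j k]mxE j0 [w _ _]mxE.
Qed.
End Alg.

Set Implicit Arguments. Unset Strict Implicit.
Lemma int_lin d (T : measurableType d) (R : realType)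
  (mu : {finite_measure set T -> \bar R}) c (b w : 'I_c -> R) (S : 'I_c -> set T)
  (mS : forall k, measurable (S k)) (muS : forall k, mu (S k) = (w k)%:E) :
  (\int[mu]_x (\sum_k b k * \1_(S k) x)%:E = (\sum_k b k * w k)%:E)%E.
Proof.
under eq_integral do rewrite -sumEFin.
rewrite integral_sum //; last first.
  move=> k; under eq_fun do rewrite EFinM.
  by apply: integrableZl => //; apply: integrable_indic.
rewrite -sumEFin; apply: eq_bigr => k _.
under eq_integral do rewrite EFinM.
rewrite integralZl //; last exact: integrable_indic.
rewrite integral_indic // setIT EFinM; congr (_ * _)%E; exact: muS.
Qed.

Section SFT2.
Variables (R : realType) (n : nat) (A : 'M[R]_n.+1) (lam : R) (u : 'I_n.+1 -> R).
Hypothesis A01 : zero_one_mx A.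
Hypothesis upos : forall i, 0 < u i.
Hypothesis ueig : forall i, \sum_j A i j * u j = lam * u i.
Variable mu : probability (Omega A) R.
Hypothesis mu_cyl : forall alpha : seq 'I_n.+1, alpha != [::] -> admissible A alpha ->
       mu (cyl A alpha) = (u (last ord0 alpha) * lam ^- (size alpha).-1)%:E.
Variable nu : seq 'I_n.+1.
Hypothesis nu_ne : nu != [::].
Hypothesis nu_adm : admissible A nu.
Variables (c : nat) (iota : 'I_c -> 'I_n.+1).
Hypothesis c2 : (2 <= c)%N.
Hypothesis iota_in : forall k, iota k \in children A (last ord0 nu).
Hypothesis iota_onto : forall i, i \in children A (last ord0 nu) -> exists k, iota k = i.
Hypothesis iota_inj : injective iota.

Local Notation l := (last ord0 nu).
Local Notation C k := (cyl A (rcons nu (iota k))).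

Lemma size_nu : (0 < size nu)%N.
Proof. by rewrite lt0n size_eq0. Qed.

Lemma A_ge0 i j : 0 <= A i j.
Proof. by case: (A01 i j) => ->. Qed.

Lemma Al k : A l (iota k) = 1.
Proof. by have := iota_in k; rewrite inE => /eqP. Qed.

Lemma lam_gt0 : 0 < lam.
Proof.
have c0 : (0 < c)%N by apply: leq_trans c2.
pose k0 : 'I_c := Ordinal c0.
have : 0 < lam * u l.
  rewrite -ueig (bigD1 (iota k0)) //= Al mul1r.
  apply: ltr_wpDr; last exact: upos.
  by apply: sumr_ge0 => j _; apply: mulr_ge0; [apply: A_ge0 | apply/ltW/upos].
by rewrite pmulr_lgt0.
Qed.

Lemma meas_cyl alpha : measurable (cyl A alpha : set (Omega A)).
Proof. by apply: sub_sigma_algebra; exists alpha. Qed.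

Lemma adm_rc k : admissible A (rcons nu (iota k)).
Proof.
move: nu_adm (Al k); rewrite /admissible.
case: nu nu_ne => // a t _ /=; rewrite rcons_path => -> /= ->.
by rewrite eqxx.
Qed.

Lemma muC k : mu (C k) = (fine (mu (cyl A nu)) * Pmat A lam u l (iota k))%:E.
Proof.
rewrite mu_cyl; last exact: adm_rc.
  2: by case: (nu).
rewrite mu_cyl // /= last_rcons size_rcons /Pmat Al.
have := size_nu; case: (size nu) => // s _ /=.
have l0 := lam_gt0; have ul := upos l.
rewrite exprS invfM; congr (_%:E); field.
by rewrite !gt_eqF // exprn_gt0.
Qed.

Lemma mc_gt0 : 0 < fine (mu (cyl A nu)).
Proof.
by rewrite mu_cyl //= mulr_gt0 ?upos // invr_gt0 exprn_gt0 // lam_gt0.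
Qed.

Lemma P_gt0 k : 0 < Pmat A lam u l (iota k).
Proof.
by rewrite /Pmat Al mul1r divr_gt0 ?mulr_gt0 ?upos ?lam_gt0.
Qed.

Lemma C_sub k (x : Omega A) : C k x -> cyl A nu x.
Proof.
move=> [ad H]; split => // m mlt.
by rewrite H ?size_rcons ?nth_rcons ?mlt // ltnS ltnW.
Qed.

Lemma C_pos k (x : Omega A) : C k x -> x (size nu) = iota k.
Proof. by move=> [_ H]; rewrite H ?size_rcons // nth_rcons ltnn eqxx. Qed.

Lemma C_disj k k' (x : Omega A) : C k x -> C k' x -> k = k'.
Proof. by move=> h1 h2; apply: iota_inj; rewrite -(@C_pos k x h1) -(@C_pos k' x h2). Qed.

Lemma cyl_C (x : Omega A) : cyl A nu x -> exists k, C k x.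
Proof.
move=> [ad H].
have child : x (size nu) \in children A l.
  rewrite inE; apply/eqP.
  have := ad (size nu).-1; rewrite prednK ?size_nu // H ?prednK ?size_nu //.
  by rewrite nth_last.
case: (iota_onto child) => k hk; exists k; split => // m.
rewrite size_rcons ltnS leq_eqVlt => /orP [/eqP -> | mlt]; rewrite nth_rcons.
  by rewrite ltnn eqxx hk.
by rewrite mlt H.
Qed.

Lemma sum_at (b : 'I_c -> R) k0 (x : Omega A) : C k0 x ->
  \sum_k b k * \1_(C k) x = b k0.
Proof.
move=> hx; rewrite (bigD1 k0) //= big1 ?addr0.
  by rewrite indicE mem_set // mulr1.
move=> k kk0; rewrite indicE memNset ?mulr0 // => hk.
by move/eqP: kk0; apply; apply: (C_disj hk hx).
Qed.

Lemma sum_out (b : 'I_c -> R) (x : Omega A) : ~ cyl A nu x ->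
  \sum_k b k * \1_(C k) x = 0.
Proof.
move=> hx; rewrite big1 // => k _; rewrite indicE memNset ?mulr0 // => hk.
by apply: hx; apply: C_sub hk.
Qed.

Lemma lin_eq (F : Omega A -> R) (b : 'I_c -> R) :
  (forall x, ~ cyl A nu x -> F x = 0) -> (forall k x, C k x -> F x = b k) ->
  forall x, F x = \sum_k b k * \1_(C k) x.
Proof.
move=> Fo Fi x; case: (pselect (cyl A nu x)) => hx.
  by case: (cyl_C hx) => k hk; rewrite (sum_at _ hk) (Fi _ _ hk).
by rewrite sum_out // Fo.
Qed.

Lemma loc_lin (b : 'I_c -> R) :
  loc_const_space nu (fun x : Omega A => \sum_k b k * \1_(C k) x).
Proof.
split; first by move=> x hx; rewrite sum_out.
move=> i hi x y hx hy; case: (iota_onto hi) => k hk; subst i.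
by rewrite (sum_at _ hx) (sum_at _ hy).
Qed.

Lemma int_C (b : 'I_c -> R) :
  (\int[mu]_x (\sum_k b k * \1_(C k) x)%:E =
   (\sum_k b k * (fine (mu (cyl A nu)) * Pmat A lam u l (iota k)))%:E)%E.
Proof. by apply: int_lin => k; [apply: meas_cyl | apply: muC]. Qed.


Lemma psum : \sum_k Pmat A lam u l (iota k) = 1.
Proof.
have su : \sum_k u (iota k) = lam * u l.
  rewrite -ueig (bigID (fun j => j \in children A l)) /= [X in _ + X]big1 ?addr0; last first.
    move=> j; rewrite inE => hj; case: (A01 l j) => [-> | h1]; first by rewrite mul0r.
    by rewrite h1 eqxx in hj.
  rewrite (eq_bigr (fun j => u j)); last by move=> j; rewrite inE => /eqP ->; rewrite mul1r.
  have -> : children A l = iota @: [set: 'I_c].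
    apply/setP => i; apply/idP/imsetP => [hi | [k _ ->]]; last exact: iota_in.
    by case: (iota_onto hi) => k hk; exists k; rewrite ?in_setT ?hk.
  rewrite big_imset /=; last by move=> ? ? _ _; apply: iota_inj.
  by apply: eq_bigl => k; rewrite in_setT.
rewrite /Pmat (eq_bigr (fun k => u (iota k) / (lam * u l))); last by move=> k _; rewrite Al mul1r.
rewrite -mulr_suml su mulfV // mulf_neq0 // gt_eqF // ?upos ?lam_gt0 //.
Qed.

Lemma main_sec :
  let mc := fine (mu (cyl A nu)) in
  let P := Pmat A lam u in
  let h := hfun (A:=A) nu P iota mc in
  let e0 := fun x : Omega A => (Num.sqrt mc)^-1 * \1_(cyl A nu) x in
  (forall j : 'I_c, (0 < j)%N -> loc_const_space nu (h j)) /\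
  (forall j : 'I_c, (0 < j)%N -> (\int[mu]_x (h j x)%:E = 0)%E) /\
  (forall j j' : 'I_c, (0 < j)%N -> (0 < j')%N ->
     ip mu (h j) (h j') = ((j == j')%:R)%:E) /\
  (loc_const_space nu e0 /\ ip mu e0 e0 = 1%E /\
   (forall j : 'I_c, (0 < j)%N -> ip mu e0 (h j) = 0%E) /\
   (forall j j' : 'I_c, (0 < j)%N -> (0 < j')%N ->
     ip mu (h j) (h j') = ((j == j')%:R)%:E) /\
   (forall f : Omega A -> R, loc_const_space nu f ->
     exists (c0 : R) (cs : 'I_c -> R),
       forall x, f x = c0 * e0 x + \sum_(j < c | (0 < j)%N) cs j * h j x)).
Proof.
move=> mc P h e0.
have mcp : 0 < mc := mc_gt0.
have pp : forall k, 0 < P l (iota k) := P_gt0.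
have ps : \sum_k P l (iota k) = 1 := psum.
have hE : forall j x, h j x = \sum_k acoef P l iota mc j k * \1_(C k) x by [].
have e0E : e0 = fun x => \sum_k (Num.sqrt mc)^-1 * \1_(C k) x.
  apply: funext; apply: lin_eq => [x hx | k x hx]; rewrite /e0 indicE.
    by rewrite memNset ?mulr0.
  by rewrite mem_set ?mulr1 //; apply: C_sub hx.
have prodE : forall (b b' : 'I_c -> R) x,
    (\sum_k b k * \1_(C k) x) * (\sum_k b' k * \1_(C k) x) =
    \sum_k (b k * b' k) * \1_(C k) x.
  move=> b b'; apply: lin_eq => [x hx | k x hx].
    by rewrite !sum_out // mul0r.
  by rewrite !(sum_at _ hx).
have ipC : forall (b b' : 'I_c -> R),
    ip mu (fun x => \sum_k b k * \1_(C k) x) (fun x => \sum_k b' k * \1_(C k) x) =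
    (\sum_k b k * b' k * (mc * P l (iota k)))%:E.
  move=> b b'; rewrite /ip; under eq_integral do rewrite prodE.
  exact: int_C.
have ipH : forall j j' : 'I_c, (0 < j)%N -> (0 < j')%N ->
     ip mu (h j) (h j') = ((j == j')%:R)%:E.
  move=> j j' j0 j0'; rewrite [LHS]ipC; congr (_%:E).
  by rewrite alg_hh.
split; first by move=> j _; apply: loc_lin.
split.
  move=> j j0; rewrite [LHS]int_C; congr (_%:E).
  by rewrite alg_int0.
split; first exact: ipH.
rewrite e0E; split; first exact: loc_lin.
split; first by rewrite ipC alg_e0.
split.
  by move=> j j0; rewrite [LHS]ipC alg_e0h.
split; first exact: ipH.
move=> f [fo fi].
pose v k := f (xget (fun _ => ord0) (C k)).
have c0 : (0 < c)%N by apply: leq_trans c2.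
pose k0 : 'I_c := Ordinal c0.
have [c1 [cs hcs]] := @alg_span _ _ _ _ _ _ _ pp mcp ps v k0 erefl.
exists c1, cs => x.
case: (pselect (cyl A nu x)) => hx.
  case: (cyl_C hx) => k hk.
  have -> : f x = v k.
    apply: (fi (iota k) (iota_in k) x _ hk); apply: xgetPex; by exists x.
  rewrite hcs (sum_at _ hk); congr (_ + _).
  by apply: eq_bigr => j _; rewrite hE (sum_at _ hk).
rewrite fo // sum_out // mulr0 add0r big1 // => j _.
by rewrite hE sum_out // mulr0.
Qed.
End SFT2.

Theorem proposition4p1 (R : realType) (n : nat) (A : 'M[R]_n.+1) (lam : R)
    (u : 'I_n.+1 -> R)
    (A01 : zero_one_mx A) (Aprim : primitive_mx A)
    (upos : forall i, 0 < u i) (usum : \sum_i u i = 1)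
    (ueig : forall i, \sum_j A i j * u j = lam * u i)
    (mu : probability (Omega A) R)
    (mu_cyl : forall alpha : seq 'I_n.+1, alpha != [::] -> admissible A alpha ->
       mu (cyl A alpha) = (u (last ord0 alpha) * lam ^- (size alpha).-1)%:E)
    (beta nu : seq 'I_n.+1)
    (beta_ne : beta != [::]) (beta_adm : admissible A beta)
    (nu_adm : admissible A nu) (nu_beta : prefix beta nu)
    (c2 : (2 <= nchildren A (last ord0 nu))%N)
    (iota : 'I_(nchildren A (last ord0 nu)) -> 'I_n.+1)
    (iota_in : forall k, iota k \in children A (last ord0 nu))
    (iota_onto : forall i, i \in children A (last ord0 nu) -> exists k, iota k = i)
    (iota_inj : injective iota) :
  let mc := fine (mu (cyl A nu)) in
  let P := Pmat A lam u in
  let h := hfun (A:=A) nu P iota mc in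
  let e0 := fun x : Omega A => (Num.sqrt mc)^-1 * \1_(cyl A nu) x in
  (* (1) *)
  (forall j : 'I_(nchildren A (last ord0 nu)), (0 < j)%N -> loc_const_space nu (h j)) /\
  (* (2) *)
  (forall j : 'I_(nchildren A (last ord0 nu)), (0 < j)%N -> (\int[mu]_x (h j x)%:E = 0)%E) /\
  (* (3) *)
  (forall j j' : 'I_(nchildren A (last ord0 nu)), (0 < j)%N -> (0 < j')%N ->
     ip mu (h j) (h j') = ((j == j')%:R)%:E) /\
  (* (4) orthonormal basis *)
  (loc_const_space nu e0 /\ ip mu e0 e0 = 1%E /\
   (forall j : 'I_(nchildren A (last ord0 nu)), (0 < j)%N -> ip mu e0 (h j) = 0%E) /\
   (forall j j' : 'I_(nchildren A (last ord0 nu)), (0 < j)%N -> (0 < j')%N ->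
     ip mu (h j) (h j') = ((j == j')%:R)%:E) /\
   (forall f : Omega A -> R, loc_const_space nu f ->
     exists (c0 : R) (cs : 'I_(nchildren A (last ord0 nu)) -> R),
       forall x, f x = c0 * e0 x + \sum_(j < nchildren A (last ord0 nu) | (0 < j)%N) cs j * h j x)).
Proof.
have nu_ne : nu != [::].
  by move: nu_beta beta_ne; case: (beta) => // b bs; case: (nu).
by apply: main_sec.
Qed.
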